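(* Let $C_1,\dots,C_n:\mathbb R\to\mathbb R$ be strictly convex and continuously differentiable and satisfy Assumption A2 with scaling factors $\zeta_i>0$, $\boldsymbol Z=\mathrm{diag}(\zeta_i)$. Let $\boldsymbol L_Q$ be the Laplacian of a connected undirected graph on $\{1,\dots,n\}$ with symmetric positive edge weights. Then for every $\boldsymbol u\in\mathbb R^n$, $$\boldsymbol u^T\boldsymbol Z\boldsymbol L_Q\nabla C(\boldsymbol u)\ge0,$$ with equality if and only if $\nabla C(\boldsymbol u)\in\mathrm{range}(\mathbf 1_n)$, i.e. $\nabla C_1(u_1)=\dots=\nabla C_n(u_n)$. (In particular this holds for $\boldsymbol u=\boldsymbol u(\boldsymbol s)$ for any $\boldsymbol s$.)
   Context: Assumption A2: there exist a strictly convex $C^1$ function $C_{\mathrm o}:\mathbb R\to\mathbb R$ and $\zeta_i>0$ such that $\nabla C_i(u)=\nabla C_{\mathrm o}(\zeta_iu)$ for all $u\in\mathbb R$ and all $i$. $\nabla C(\boldsymbol u)=(\nabla C_i(u_i))_{i=1}^n$. Laplacian: $(\boldsymbol L_Q)_{ij}=-Q_{ij}$ for $i\ne j$, $(\boldsymbol L_Q)_{ii}=\sum_{j\ne i}Q_{ij}$, with $Q_{ij}=Q_{ji}>0$ on edges and $0$ otherwise. *)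

(* Defs.v *)
From HB Require Import structures.
From mathcomp Require Import all_boot all_order all_algebra.
From mathcomp Require Import all_classical all_reals all_analysis.
Set Implicit Arguments. Unset Strict Implicit. Unset Printing Implicit Defensive.
Import Order.TTheory GRing.Theory Num.Theory.
Import numFieldNormedType.Exports.
Local Open Scope ring_scope.

Definition strictly_convex (R : realType) (f : R -> R) : Prop :=
  forall x y t : R, x != y -> 0 < t -> t < 1 ->
    f (t * x + (1 - t) * y) < t * f x + (1 - t) * f y.

Definition C1 (R : realType) (f : R -> R) : Prop :=
  (forall x : R, derivable f x 1) /\ continuous (derive1 f).

(* Laplacian of the weight matrix Q (only off-diagonal entries are used) *)
Definition laplacian (R : realType) (n : nat) (Q : 'M[R]_n) : 'M[R]_n :=
  \matrix_(i, j) (if i == j then \sum_(k | k != i) Q i k else - Q i j).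

Definition edge_rel (R : realType) (n : nat) (Q : 'M[R]_n) : rel 'I_n :=
  fun i j => (i != j) && (0 < Q i j).

Definition weight_matrix (R : realType) (n : nat) (Q : 'M[R]_n) : Prop :=
  (forall i j, Q i j = Q j i) /\ (forall i j, 0 <= Q i j).

Definition connected_graph (R : realType) (n : nat) (Q : 'M[R]_n) : Prop :=
  forall i j : 'I_n, connect (edge_rel Q) i j.

(* gradient of C(u) = sum_i C_i(u_i) *)
Definition gradC (R : realType) (n : nat) (C : 'I_n -> R -> R) (u : 'cV[R]_n)
  : 'cV[R]_n := \col_i (derive1 (C i) (u i 0)).

(* Main.v *)
Require Import Defs.
From HB Require Import structures.
From mathcomp Require Import all_boot all_order all_algebra.
From mathcomp Require Import all_classical all_reals all_analysis.
From mathcomp Require Import ring lra.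
Import Order.TTheory GRing.Theory Num.Theory.
Import numFieldNormedType.Exports.
Local Open Scope ring_scope.
Local Open Scope classical_set_scope.

Section S.
Variable R : realType.

Lemma deriv_cvg (f : R -> R) x : derivable f x 1 ->
  (fun h => h^-1 * (f (h + x) - f x)) @ 0^' --> derive1 f x.
Proof.
move=> df; rewrite derive1E.
have -> : (fun h => h^-1 * (f (h + x) - f x)) =
  (fun h => h^-1 *: ((f \o shift x) (h *: (1:R)) - f x)).
  by apply/funext => h; rewrite /= [h *: 1]mulr1.
exact: df.
Qed.

Lemma slope_right (f : R -> R) x y : strictly_convex f -> derivable f x 1 ->
  x < y -> derive1 f x * (y - x) <= f y - f x.
Proof.
move=> cf df xy.
have yx0 : 0 < y - x by rewrite subr_gt0.
rewrite -ler_pdivlMr //.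
have hc := cvg_dnbhs_at_right (@deriv_cvg f x df).
apply: (cvgr_to_le hc).
near=> h.
have h0 : 0 < h by near: h; exact: nbhs_right_gt.
have hl : h < y - x by near: h; exact: nbhs_right_lt.
set t := h / (y - x).
have t0 : 0 < t by rewrite divr_gt0.
have t1 : t < 1 by rewrite ltr_pdivrMr // mul1r.
have := cf y x t; rewrite gt_eqF // => /(_ isT t0 t1).
have -> : t * y + (1 - t) * x = h + x.
  rewrite /t; field; by rewrite lt0r_neq0.
move=> H.
rewrite ler_pdivrMl //.
have -> : h * ((f y - f x) / (y - x)) = t * (f y - f x) by rewrite /t; ring.
apply/ltW; lra.
Unshelve. all: by end_near.
Qed.


Lemma slope_left (f : R -> R) x y : strictly_convex f -> derivable f y 1 ->
  x < y -> f y - f x <= derive1 f y * (y - x).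
Proof.
move=> cf df xy.
have yx0 : 0 < y - x by rewrite subr_gt0.
rewrite -ler_pdivrMr //.
have xy0 : x - y < 0 by rewrite subr_lt0.
have hc := cvg_dnbhs_at_left (@deriv_cvg f y df).
apply: (cvgr_to_ge hc).
near=> h.
have h0 : h < 0 by near: h; exact: nbhs_left_lt.
have hl : x - y < h by near: h; exact: nbhs_left_gt.
set t := - h / (y - x).
have t0 : 0 < t by rewrite divr_gt0 // oppr_gt0.
have t1 : t < 1 by rewrite ltr_pdivrMr // mul1r ltrNl opprB.
have := cf x y t; rewrite lt_eqF // => /(_ isT t0 t1).
have -> : t * x + (1 - t) * y = h + y.
  rewrite /t; field; by rewrite lt0r_neq0.
move=> H.
rewrite ler_ndivlMl //.
have -> : h * ((f y - f x) / (y - x)) = t * (f x - f y) by rewrite /t; ring.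
apply/ltW; lra.
Unshelve. all: by end_near.
Qed.


Lemma deriv_strict_mono (f : R -> R) a b : strictly_convex f ->
  (forall x, derivable f x 1) -> a < b -> derive1 f a < derive1 f b.
Proof.
move=> cf df ab.
set m := (a + b) / 2.
have am : a < m by rewrite /m; lra.
have mb : m < b by rewrite /m; lra.
have h1 := @slope_right f a m cf (df a) am.
have h2 := @slope_left f m b cf (df b) mb.
have t0 : 0 < (2:R)^-1 by rewrite invr_gt0.
have t1 : (2:R)^-1 < 1 by rewrite invf_lt1 // ltr1n.
have := cf a b (2^-1) ltac:(by rewrite lt_eqF) t0 t1.
have -> : 2^-1 * a + (1 - 2^-1) * b = m by rewrite /m; field.
move=> h3.
have ma : m - a = b - m by rewrite /m; field.
rewrite ma in h1.
have d0 : 0 < b - m by rewrite subr_gt0.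
rewrite -(ltr_pM2r d0).
have e : 1 - (2:R)^-1 = 2^-1 by field.
rewrite e in h3.
have : f m - f a < f b - f m by lra.
lra.
Qed.

Lemma mono_prod (f : R -> R) a b : strictly_convex f ->
  (forall x, derivable f x 1) ->
  (0 <= (a - b) * (derive1 f a - derive1 f b)) /\
  ((a - b) * (derive1 f a - derive1 f b) = 0 -> a = b).
Proof.
move=> cf df.
have [ab|ba|->] := ltgtP a b.
- have := @deriv_strict_mono f a b cf df ab => h.
  have p : 0 < (a - b) * (derive1 f a - derive1 f b).
    by rewrite nmulr_rgt0 ?subr_lt0 // subr_lt0.
  by split; [exact: ltW | move=> e; rewrite e ltxx in p].
- have := @deriv_strict_mono f b a cf df ba => h.
  have p : 0 < (a - b) * (derive1 f a - derive1 f b).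
    by rewrite mulr_gt0 // subr_gt0.
  by split; [exact: ltW | move=> e; rewrite e ltxx in p].
- by rewrite subrr mul0r.
Qed.

End S.

Lemma connect_eq (T : finType) (e : rel T) (A : Type) (g : T -> A) :
  (forall i j, e i j -> g i = g j) -> forall i j, connect e i j -> g i = g j.
Proof.
move=> H i j /connectP [p]; elim: p i => [|k p IH] i /=; first by move=> _ ->.
move=> /andP[eik pk] jl; rewrite (H _ _ eik); exact: IH pk jl.
Qed.

Theorem corollary1 (R : realType) (n : nat) (C : 'I_n -> R -> R)
  (Co : R -> R) (zeta : 'I_n -> R) (Q : 'M[R]_n)
  (hC : forall i, strictly_convex (C i) /\ C1 (C i))
  (hCo : strictly_convex Co /\ C1 Co)
  (hzeta : forall i, 0 < zeta i)
  (hA2 : forall i (x : R), derive1 (C i) x = derive1 Co (zeta i * x))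
  (hQ : weight_matrix Q) (hconn : connected_graph Q)
  (u : 'cV[R]_n) :
  let Z := diag_mx (\row_i zeta i) in
  let val := (u^T *m Z *m laplacian Q *m gradC C u) 0 0 in
  0 <= val /\
  (val = 0 <-> exists c : R, gradC C u = c *: const_mx 1).
Proof.
move=> Z val.
change (0 <= (val : R) /\ ((val : R) = 0 <-> exists c : R, gradC C u = c *: const_mx 1)).
case: hCo => cCo [dCo _].
case: hQ => Qsym Qge0.
set v := fun i => zeta i * u i 0.
set g := fun i => derive1 (C i) (u i 0).
have gE : forall i, g i = derive1 Co (v i) by move=> i; rewrite /g hA2.
have gradE : forall i k, gradC C u i k = g i by move=> i k; rewrite /gradC mxE.
have E1 : val = \sum_i v i * \sum_j Q i j * (g i - g j).
  rewrite /val -!mulmxA mxE; apply: eq_bigr => i _.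
  rewrite /Z mul_diag_mx !mxE mulrA [u i 0 * _]mulrC; congr (_ * _).
  rewrite (bigD1 i) //= [in RHS](bigD1 i) //= subrr mulr0 add0r.
  rewrite [RHS](eq_bigr (fun j => Q i j * g i - Q i j * g j)); last by move=> j _; rewrite mulrBr.
  rewrite sumrB -mulr_suml /laplacian !mxE eqxx /g; congr (_ + _).
  rewrite -sumrN; apply: eq_bigr => j ji.
  by rewrite !mxE eq_sym (negbTE ji) ?mulNr.
set T := fun i j => Q i j * ((v i - v j) * (g i - g j)).
have E2 : val = (\sum_i \sum_j T i j) / 2.
  have E1' : val = \sum_i \sum_j Q i j * (v j * (g j - g i)).
    rewrite E1 exchange_big /=; apply: eq_bigr => j _.
    rewrite mulr_sumr; apply: eq_bigr => i _; rewrite Qsym; ring.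
  have : 2 * val = \sum_i \sum_j T i j.
    have -> : 2 * val = val + val by ring.
    rewrite {1}E1 E1' -big_split /=; apply: eq_bigr => i _.
    rewrite mulr_sumr -big_split /=; apply: eq_bigr => j _; rewrite /T; ring.
  by move=> <-; rewrite mulrC mulKf // pnatr_eq0.
have T0 : forall i j, 0 <= T i j.
  move=> i j; apply: mulr_ge0; first exact: Qge0.
  rewrite !gE; exact: (proj1 (@mono_prod R Co (v i) (v j) cCo dCo)).
have S0 : forall i, 0 <= \sum_j T i j by move=> i; apply: sumr_ge0 => j _.
split.
  by rewrite E2 divr_ge0 //; apply: sumr_ge0 => i _.
split.
- move=> val0.
  have Ssum : \sum_i \sum_j T i j = 0.
    have : (\sum_i \sum_j T i j) / 2 = 0 by rewrite -E2.
    by move/eqP; rewrite mulf_eq0 invr_eq0 pnatr_eq0 orbF => /eqP.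
  have Tz : forall i j, T i j = 0.
    move=> i j.
    have := psumr_eq0P (fun i _ => S0 i) Ssum (isT : true) => /(_ i) Si.
    exact: (psumr_eq0P (fun j _ => T0 i j) Si).
  have edge : forall i j, edge_rel Q i j -> g i = g j.
    move=> i j /andP[_ qij].
    have := Tz i j; rewrite /T => /eqP; rewrite mulf_eq0 (gt_eqF qij) /= => /eqP.
    rewrite !gE => /(proj2 (@mono_prod R Co (v i) (v j) cCo dCo)) ->; done.
  have allg : forall i j, g i = g j.
    by move=> i j; exact: (@connect_eq _ (edge_rel Q) _ g edge i j (hconn i j)).
  exists ((\sum_i g i) / n%:R).
  apply/matrixP => i k; rewrite gradE !mxE mulr1.
  have -> : \sum_i0 g i0 = n%:R * g i.
    rewrite (eq_bigr (fun _ => g i)); last by move=> j _; rewrite (allg j i).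
    by rewrite sumr_const card_ord mulr_natl.
  have n0 : n%:R != 0 :> R by rewrite pnatr_eq0 -lt0n (leq_ltn_trans _ (ltn_ord i)).
  by rewrite mulrC mulKf.
- case=> c hc.
  have gc : forall i, g i = c by move=> i; rewrite -(gradE i 0) hc !mxE mulr1.
  rewrite E1; apply: big1 => i _; rewrite big1 ?mulr0 // => j _.
  by rewrite !gc subrr mulr0.
Qed.
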